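(* Let $u=u(x)$ be a fixed (time-independent) analytic change of coordinates on a domain in $\mathbb C^n$. For each $t$ let $\widetilde L_i(u,t)=\partial/\partial u^i+q_i(u,t)-\hbar^{-1}e_i$, $i=1,\dots,n$, be pairwise commuting, and put $\widetilde L_\alpha(x,t)=\sum_i\frac{\partial u^i}{\partial x^\alpha}\widetilde L_i(u(x),t)$ (so $\widetilde L_\alpha=\partial/\partial x^\alpha+q_\alpha(x,t)-\hbar^{-1}a_\alpha(x)$ with $a_\alpha=diag(\partial u^1/\partial x^\alpha,\dots,\partial u^n/\partial x^\alpha)$). Then, for $b\in Diag[\hbar^{-1}]$, $\{\widetilde L_i(u,t)\}$ satisfies $$\frac{\partial\widetilde L_i}{\partial t}=[\widetilde\varphi(b)_{\le0},\widetilde L_i]\quad\text{for all }i$$ if and only if $\{\widetilde L_\alpha(x,t)\}$ satisfies $$\frac{\partial\widetilde L_\alpha}{\partial t}=[\widetilde\varphi(b)_{\le0},\widetilde L_\alpha]\quad\text{for all }\alpha$$ with the same $b$, where in each case $\widetilde\varphi(b)=\widetilde Tb\widetilde T^{-1}$ with $\widetilde T$ the dressing transformation of the respective family.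
   Context: $e_i$ is the matrix unit $(e_i)_{jk}=\delta_{ij}\delta_{ik}$; $q_i,q_\alpha$ are $Mat(n,\mathbb C)$-valued functions; $Diag$ denotes diagonal matrices and $Diag[\hbar^{-1}]$ polynomials in $\hbar^{-1}$ with constant diagonal coefficients. Dressing transformation of $\{\widetilde L_i(u,t)\}$: for each $t$, a formal series $\widetilde T(\hbar,u,t)=Id+\sum_{k\ge1}\hbar^k\widetilde T_k$ with $\widetilde T^{-1}\widetilde L_i\widetilde T=\partial/\partial u^i-e_i\hbar^{-1}+h_i$, $h_i\in Diag[[\hbar]]$ for all $i$; dressing transformation of $\{\widetilde L_\alpha(x,t)\}$: $\widetilde T(\hbar,x,t)=Id+O(\hbar)$ with $\widetilde T^{-1}\widetilde L_\alpha\widetilde T=\partial/\partial x^\alpha-a_\alpha\hbar^{-1}+h_\alpha$, $h_\alpha\in Diag[[\hbar]]$ for all $\alpha$. Such $\widetilde T$ is unique up to right multiplication by diagonal series, so $\widetilde\varphi(b)$ is well defined. For a Laurent series $v=\sum_lv_l\hbar^l$, $v_{\le k}=\sum_{l\le k}v_l\hbar^l$. Conjugation: $T^{-1}(\partial+A)T=\partial+T^{-1}\partial T+T^{-1}AT$; $[\partial+A,M]=\partial M+[A,M]$; $\partial\widetilde L/\partial t$ means the time derivative of the potential term. *)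

(* Defs.v *)
From HB Require Import structures.
From mathcomp Require Import all_boot all_order all_algebra.
From mathcomp Require Import all_classical all_reals all_analysis.
From mathcomp Require Import complex.
Import Order.TTheory GRing.Theory Num.Theory.

Set Implicit Arguments.
Unset Strict Implicit.
Unset Printing Implicit Defensive.

Local Open Scope ring_scope.

(* Formal Laurent series in hbar with coefficients in Mat(n,C), C = R[i]:
   x : lser R n,  x l = coefficient of hbar^l. *)
Definition lser (R : realType) (n : nat) := int -> 'M[R[i]]_n.

Section Series.
Variables (R : realType) (n : nat).
Local Notation C := (R[i]).
Local Notation M := ('M[C]_n).
Local Notation ser := (lser R n).

(* Product of two Laurent series whose supports are contained in [-N, +oo). *)
Definition lmul (N : nat) (x y : ser) : ser := fun l =>
  if l + Posz (2 * N)%N < 0 then 0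
  else \sum_(k < (absz (l + Posz (2 * N)%N)).+1) x (Posz k - Posz N) *m y (l - Posz k + Posz N).

Definition lone : ser := fun l => if l == 0 then 1%:M else 0.

(* Inverse of a formal power series T = Id + O(hbar) (Neumann series
   sum_m (Id - T)^m, truncated where it is exact). *)
Definition sinv (T : ser) : ser := fun l =>
  if l < 0 then 0
  else \sum_(m < (absz l).+1)
         iter m (lmul 0 (fun k => lone k - T k)) lone l.

Definition trunc0 (x : ser) : ser := fun l => if l <= 0 then x l else 0.

Definition lpot (q E : M) : ser := fun l =>
  if l == 0 then q else if l == -1 then - E else 0.

Definition ltarget (E : M) (h : ser) : ser := fun l =>
  if l == -1 then - E else h l.

(* The Laurent polynomial b = sum_k b_k hbar^{-k}. *)
Definition lpolyinv (b : nat -> M) : ser := fun l =>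
  if l <= 0 then b (absz l) else 0.

(* Matrix unit e_i and unit row vector (direction of d/du^i). *)
Definition eunit (i : 'I_n) : M := delta_mx i i.
Definition rdir (i : 'I_n) : 'rV[C]_n := delta_mx 0 i.

(* Complex (Frechet) differentiability at a point, i.e. holomorphy near it. *)
Definition cdiff_rM (f : 'rV[C]_n -> M) (p : 'rV[C]_n) : Prop :=
  differentiable (fun p' : ('rV[C]_n : normedModType C) => f p')
                 (p : ('rV[C]_n : normedModType C)).
Definition cdiff_rr (f : 'rV[C]_n -> 'rV[C]_n) (p : 'rV[C]_n) : Prop :=
  differentiable (fun p' : ('rV[C]_n : normedModType C) => f p')
                 (p : ('rV[C]_n : normedModType C)).
Definition cdiff_CM (f : C -> M) (t : C) : Prop :=
  differentiable (fun s : C^o => f s) (t : C^o).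

Definition open_rV (D : set 'rV[C]_n) : Prop :=
  open (D : set ('rV[C]_n : normedModType C)).
Definition connected_rV (D : set 'rV[C]_n) : Prop :=
  connected (D : set ('rV[C]_n : normedModType C)).
Definition open_C (Th : set C) : Prop := open (Th : set C^o).

Definition pderiv (i : 'I_n) (F : 'rV[C]_n -> ser) : 'rV[C]_n -> ser :=
  fun p l => 'D_(rdir i) (fun p' => F p' l) p.

Definition tderiv (F : C -> ser) : C -> ser :=
  fun t l => 'D_1 (fun s : C^o => F s l) t.

(* {L_i = d_i + A i} is a pairwise commuting family at time t on D:
   [d_i + A_i, d_j + A_j] = d_i A_j - d_j A_i + [A_i, A_j] = 0. *)
Definition commuting (D : set 'rV[C]_n) (A : 'I_n -> 'rV[C]_n -> ser) : Prop :=
  forall i j p, D p -> forall l,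
    pderiv i (A j) p l - pderiv j (A i) p l
    + lmul 1 (A i p) (A j p) l - lmul 1 (A j p) (A i p) l = 0.

(* T is a dressing transformation of {d_i + A i} (on D) with leading
   terms E i:  T = Id + sum_{k>=1} hbar^k T_k and
   T^{-1} (d_i + A_i) T = d_i - E_i hbar^{-1} + h_i,  h_i in Diag[[hbar]],
   where T^{-1} (d + A) T = d + T^{-1} dT + T^{-1} A T. *)
Definition is_dressing (D : set 'rV[C]_n) (A : 'I_n -> 'rV[C]_n -> ser)
    (E : 'I_n -> 'rV[C]_n -> M) (T : 'rV[C]_n -> ser) : Prop :=
  [/\ forall p l, l < 0 -> T p l = 0,
      forall p, T p 0 = 1%:M,
      forall l p, D p -> differentiable (fun p' : ('rV[C]_n : normedModType C) => T p' l) (p : ('rV[C]_n : normedModType C)) &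
      exists h : 'I_n -> 'rV[C]_n -> ser,
        [/\ forall i p l, is_diag_mx (h i p l),
            forall i p l, l < 0 -> h i p l = 0 &
            forall i p, D p -> forall l,
              lmul 1 (sinv (T p)) (pderiv i T p) l
              + lmul 1 (lmul 1 (sinv (T p)) (A i p)) (T p) l
              = ltarget (E i p) (h i p) l]].

(* phi(b)_{<= 0} = (T b T^{-1})_{<= 0}, b of degree <= d in hbar^{-1}. *)
Definition phib_le0 (d : nat) (b : nat -> M) (T : ser) : ser :=
  trunc0 (lmul d (lmul d T (lpolyinv b)) (sinv T)).

(* The Lax equations dA_i/dt = [phi(b)_{<=0}, d_i + A_i] for all i, on D x Theta,
   where [M, d + A] = - dM + M A - A M. *)
Definition lax_eq (D : set 'rV[C]_n) (Th : set C)
    (A : 'I_n -> 'rV[C]_n -> C -> ser) (T : 'rV[C]_n -> C -> ser)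
    (d : nat) (b : nat -> M) : Prop :=
  forall i p t, D p -> Th t -> forall l,
    tderiv (A i p) t l =
      - pderiv i (fun p' => phib_le0 d b (T p' t)) p l
      + lmul d.+1 (phib_le0 d b (T p t)) (A i p t) l
      - lmul d.+1 (A i p t) (phib_le0 d b (T p t)) l.

Definition Au (q : 'I_n -> 'rV[C]_n -> C -> M) : 'I_n -> 'rV[C]_n -> C -> ser :=
  fun i y t => lpot (q i y t) (eunit i).

(* Jacobian entry  du^i/dx^alpha (x). *)
Definition jac (u : 'rV[C]_n -> 'rV[C]_n) (i a : 'I_n) (x : 'rV[C]_n) : C :=
  ('D_(rdir a) u x) 0 i.

(* The x-family potentials: L_alpha = sum_i du^i/dx^alpha L_i(u(x),t). *)
Definition Ax (u : 'rV[C]_n -> 'rV[C]_n) (q : 'I_n -> 'rV[C]_n -> C -> M)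
  : 'I_n -> 'rV[C]_n -> C -> ser :=
  fun a x t l => \sum_(i < n) jac u i a x *: Au q i (u x) t l.

Definition amat (u : 'rV[C]_n -> 'rV[C]_n) (a : 'I_n) (x : 'rV[C]_n) : M :=
  diag_mx (\row_i jac u i a x).

End Series.

(* Main.v *)
Require Import Defs.
From HB Require Import structures.
From mathcomp Require Import all_boot all_order all_algebra.
From mathcomp Require Import all_classical all_reals all_analysis.
From mathcomp Require Import complex.
From mathcomp Require Import zify.
Import Order.TTheory GRing.Theory Num.Theory.
Local Open Scope ring_scope.

Set Implicit Arguments.
Unset Strict Implicit.
Unset Printing Implicit Defensive.
Section Alg.
Variables (R : realType) (n : nat).
Local Notation C := (R[i]).
Local Notation M := ('M[C]_n.+1).
Local Notation ser := (lser R n.+1).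

Definition supp (s : nat) (x : ser) := forall l : int, l < - (s%:Z) -> x l = 0.
Definition eqK (K : nat) (p q : {poly M}) := forall j, (j < K)%N -> p`_j = q`_j.
Definition rep K s (x : ser) (p : {poly M}) :=
  forall j, (j < K)%N -> x (j%:Z - s%:Z) = p`_j.

Lemma rep_lmul K s r N x y p q : supp s x -> supp r y -> (s <= N)%N -> (r <= N)%N ->
  rep K s x p -> rep K r y q -> rep K (s + r) (lmul N x y) (p * q).
Proof.
move=> sx sy sN rN rx ry j jK.
rewrite /lmul.
have e : (j%:Z - (s+r)%N%:Z) + (2*N)%N%:Z = ((j + 2*N) - (s + r))%N%:Z by lia.
rewrite e.
have -> : (Posz ((j + 2 * N) - (s + r))%N < 0) = false by apply/negbTE; lia.
rewrite /= coefM.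

rewrite -(big_mkord xpredT (fun k => x (k%:Z - N%:Z) *m y (j%:Z - (s + r)%N%:Z - k%:Z + N%:Z))).
rewrite (@big_cat_nat _ _ _ (N - s)) //=; last by lia.
rewrite [X in _ + X](@big_cat_nat _ _ _ ((N - s) + j.+1)) //=; [|lia|lia].
rewrite big_nat_cond big1 /=; last first.
  move=> k /andP[hk _]; rewrite sx ?mul0mx //; lia.
rewrite add0r [X in _ + X]big_nat_cond [X in _ + X]big1 /=; last first.
  move=> k /andP[/andP[hk hk'] _]; rewrite sy ?mulmx0 //; lia.
rewrite addr0 -{1}[(N - s)%N]add0n big_addn.
have -> : ((N - s) + j.+1 - (N - s))%N = j.+1 by lia.
rewrite big_mkord; apply: eq_bigr => i _.
have ij : (i <= j)%N by rewrite -ltnS.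
rewrite -rx; last by apply: leq_ltn_trans jK.
rewrite -ry; last by apply: leq_ltn_trans (leq_subr _ _) jK.
rewrite mulmxE; congr (x _ * y _); lia.
Qed.

Lemma supp_lmul N s r x y : supp s x -> supp r y -> supp (s + r) (lmul N x y).
Proof.
move=> sx sy l hl; rewrite /lmul; case: ifP => // _.
apply: big1 => k _.
have [hk|hk] := ltP (k%:Z - N%:Z) (- s%:Z).
  by rewrite sx ?mul0mx.
by rewrite sy ?mulmx0 //; lia.
Qed.

Lemma eqK_mul K p p' q q' : eqK K p p' -> eqK K q q' -> eqK K (p * q) (p' * q').
Proof.
move=> ep eq j jK; rewrite !coefM; apply: eq_bigr => i _.
have ij : (i <= j)%N by rewrite -ltnS.
rewrite ep ?eq //; [exact: leq_ltn_trans (leq_subr _ _) jK| exact: leq_ltn_trans jK].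
Qed.

Lemma eqK_add K p p' q q' : eqK K p p' -> eqK K q q' -> eqK K (p + q) (p' + q').
Proof. by move=> ep eq j jK; rewrite !coefD ep ?eq. Qed.

Lemma eqK_refl K p : eqK K p p. Proof. by []. Qed.
Lemma eqK_sym K p q : eqK K p q -> eqK K q p. Proof. by move=> e j jK; rewrite e. Qed.
Lemma eqK_trans K p q r : eqK K p q -> eqK K q r -> eqK K p r.
Proof. by move=> e1 e2 j jK; rewrite e1 ?e2. Qed.

Lemma rep_eqK K s x p q : rep K s x p -> eqK K p q -> rep K s x q.
Proof. by move=> rx e j jK; rewrite rx ?e. Qed.

Lemma rep_uniq K s x y p q : supp s x -> supp s y -> rep K s x p -> rep K s y q ->
  eqK K p q -> forall l, l + s%:Z < K%:Z -> x l = y l.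
Proof.
move=> sx sy rx ry e l hl.
have [hl'|hl'] := ltP l (- s%:Z); first by rewrite sx ?sy.
have -> : l = (absz (l + s%:Z))%:Z - s%:Z by lia.
rewrite rx ?ry ?e //; lia.
Qed.

Definition polK s K (x : ser) : {poly M} := \poly_(i < K) x (i%:Z - s%:Z).

Lemma rep_polK s K x : rep K s x (polK s K x).
Proof. by move=> j jK; rewrite coef_poly jK. Qed.

Lemma rep_add K s x y p q : rep K s x p -> rep K s y q ->
  rep K s (fun l => x l + y l) (p + q).
Proof. by move=> rx ry j jK; rewrite coefD rx ?ry. Qed.

Lemma rep_opp K s x p : rep K s x p -> rep K s (fun l => - x l) (- p).
Proof. by move=> rx j jK; rewrite coefN rx. Qed.

Lemma supp_add s x y : supp s x -> supp s y -> supp s (fun l => x l + y l).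
Proof. by move=> sx sy l hl; rewrite sx ?sy ?addr0. Qed.

Lemma supp_le s s' x : (s <= s')%N -> supp s x -> supp s' x.
Proof. by move=> ss sx l hl; apply: sx; lia. Qed.

Lemma rep_shift K s x p : supp s x -> rep K s x p -> rep K s.+1 x ('X * p).
Proof.
move=> sx rx j jK; rewrite coefXM; case: j jK => [|j] jK /=.
  by rewrite sx //; lia.
rewrite -rx; last by apply: ltnW.
congr x; lia.
Qed.

Definition lone_ : ser := @lone R n.+1.

Lemma rep_lone K : rep K 0 lone_ 1.
Proof.
move=> j jK; rewrite coefC /lone_ /lone.
by case: j jK => [|j] //= _; rewrite subr0.
Qed.

Lemma supp_lone : supp 0 lone_.
Proof. move=> l hl; rewrite /lone_ /lone; case: eqP => // e; lia. Qed.


Lemma coef_pow_small (c : {poly M}) : c`_0 = 0 ->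
  forall m j, (j < m)%N -> (c ^+ m)`_j = 0.
Proof.
move=> c0; elim=> [//|m IH] j jm.
rewrite exprS coefM big1 // => i _.
case: (nat_of_ord i) (ltn_ord i) => [|i'] hi; first by rewrite c0 mul0r.
by rewrite IH ?mulr0 //; lia.
Qed.

Definition geo K (p : {poly M}) : {poly M} := \sum_(m < K) (1 - p) ^+ m.

Lemma geo_mull K (c : {poly M}) : (1 - c) * \sum_(m < K) c ^+ m = 1 - c ^+ K.
Proof.
elim: K => [|K IH]; first by rewrite big_ord0 mulr0 expr0 subrr.
rewrite big_ord_recr /= mulrDr IH mulrBl mul1r exprS.
by rewrite addrA subrK.
Qed.

Lemma geo_mulr K (c : {poly M}) : (\sum_(m < K) c ^+ m) * (1 - c) = 1 - c ^+ K.
Proof.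
elim: K => [|K IH]; first by rewrite big_ord0 mul0r expr0 subrr.
rewrite big_ord_recr /= mulrDl IH mulrBr mulr1 exprSr.
by rewrite addrA subrK.
Qed.

Lemma eqK_pow1 K (c : {poly M}) : c`_0 = 0 -> eqK K (1 - c ^+ K) 1.
Proof. by move=> c0 j jK; rewrite coefB coef_pow_small // subr0. Qed.

Lemma geo_inv K (p : {poly M}) : p`_0 = 1 -> eqK K (p * geo K p) 1 /\ eqK K (geo K p * p) 1.
Proof.
move=> p0; have c0 : (1 - p)`_0 = 0 by rewrite coefB p0 coefC subrr.
rewrite /geo; set c := 1 - p.
have -> : p = 1 - c by rewrite /c opprB addrC subrK.
by split; [rewrite geo_mull | rewrite geo_mulr]; apply: eqK_pow1.
Qed.

Lemma rep_iter K x p : supp 0 x -> rep K 0 x p -> forall m,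
  supp 0 (iter m (lmul 0 (fun k => lone_ k - x k)) lone_) /\
  rep K 0 (iter m (lmul 0 (fun k => lone_ k - x k)) lone_) ((1 - p) ^+ m).
Proof.
move=> sx rx; have s1 : supp 0 (fun k => lone_ k - x k).
  by apply: supp_add => //; [exact: supp_lone | move=> l hl; rewrite sx ?oppr0].
have r1 : rep K 0 (fun k => lone_ k - x k) (1 - p).
  by apply: rep_add; [exact: rep_lone | exact: rep_opp].
elim=> [|m [IHs IHr]]; first by split; [exact: supp_lone | rewrite expr0; exact: rep_lone].
rewrite iterS exprS; split.
  by apply: (@supp_lmul 0 0 0).
by apply: (@rep_lmul K 0 0 0).
Qed.

Lemma supp_sinv (x : ser) : supp 0 (sinv x).
Proof. by move=> l hl; rewrite /sinv hl. Qed.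

Lemma sinv0 (x : ser) : sinv x 0 = 1%:M.
Proof. by rewrite /sinv /= big_ord1 /= /lone eqxx. Qed.

Lemma rep_sinv K x p : supp 0 x -> x 0 = 1%:M -> rep K 0 x p -> rep K 0 (sinv x) (geo K p).
Proof.
move=> sx x0 rx j jK; rewrite subr0 /sinv /=.
have c0 : forall m, (j < m)%N -> ((1 - p) ^+ m)`_j = 0.
  move=> m jm; apply: (coef_pow_small _ jm); rewrite coefB coefC /=.
  have := rx 0%N; rewrite subr0 => <-; last by lia.
  by rewrite x0 subrr.
rewrite /geo coef_sum.
have -> : K = (j.+1 + (K - j.+1))%N by lia.
rewrite big_split_ord /= [X in _ + X]big1 ?addr0; last first.
  by move=> i _; rewrite c0 //=; lia.
apply: eq_bigr => i _ /=.
have := (rep_iter sx rx i).2 j jK; rewrite subr0 => ->.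
by [].
Qed.

Lemma lone_sinv x : supp 0 x -> x 0 = 1%:M -> forall l,
  lmul 0 x (sinv x) l = lone_ l /\ lmul 0 (sinv x) x l = lone_ l.
Proof.
move=> sx x0 l.
pose K := (absz l).+1.
have rx := @rep_polK 0 K x.
have p0 : (polK 0 K x)`_0 = 1 by rewrite -[0%N]/(0%N : nat) -rx // subr0 x0.
have [e1 e2] := geo_inv K p0.
have rs := rep_sinv sx x0 rx.
have ss := supp_sinv x.
have l1 : l + (0%N)%:Z < K%:Z by lia.
split.
- have h1 := (supp_lmul 0 sx ss).
  have h2 := (rep_lmul sx ss (leqnn 0) (leqnn 0) rx rs).
  exact: (rep_uniq h1 (@supp_lone : supp 0 lone_) h2 (@rep_lone K) e1 l1).
- exact: (rep_uniq (supp_lmul 0 ss sx) (@supp_lone : supp 0 lone_) (rep_lmul ss sx (leqnn 0) (leqnn 0) rs rx) (@rep_lone K) e2 l1).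
Qed.


Lemma rep_eqK2 K s x p q : rep K s x p -> rep K s x q -> eqK K p q.
Proof. by move=> rp rq j jK; rewrite -rp // -rq. Qed.

Lemma rep_ext K s x y p : (forall l, x l = y l) -> rep K s x p -> rep K s y p.
Proof. by move=> e rx j jK; rewrite -e rx. Qed.

Lemma supp_ext s x y : (forall l, x l = y l) -> supp s x -> supp s y.
Proof. by move=> e sx l hl; rewrite -e sx. Qed.

Lemma eqK_mull K p q q' : eqK K q q' -> eqK K (p * q) (p * q').
Proof. by move=> e; apply: eqK_mul. Qed.
Lemma eqK_mulr K p q q' : eqK K q q' -> eqK K (q * p) (q' * p).
Proof. by move=> e; apply: eqK_mul. Qed.

Lemma lmul00 (x y : ser) : lmul 0 x y 0 = x 0 *m y 0.
Proof. by rewrite /lmul /= big_ord1 /=. Qed.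

Lemma diag_comm (A B : M) : is_diag_mx A -> is_diag_mx B -> A * B = B * A.
Proof.
move=> /is_diag_mxP dA /is_diag_mxP dB; apply/matrixP => i j; rewrite !mxE.
rewrite (bigD1 i) //= [X in _ = X](bigD1 j) //= !big1 ?addr0.
- case: (eqVneq i j) => [->|ij]; first by rewrite mulrC.
  by rewrite dB // mulr0 mul0r.
- by move=> k kj; rewrite dA ?mulr0.
- by move=> k ki; rewrite dA ?mul0r // eq_sym.
Qed.

Lemma poly_comm (p q : {poly M}) : (forall i j, p`_i * q`_j = q`_j * p`_i) -> p * q = q * p.
Proof.
move=> h; apply/polyP => j; rewrite coefM coefMr; apply: eq_bigr => i _; exact: h.
Qed.

Lemma diag_polK s K (x : ser) : (forall l, is_diag_mx (x l)) -> forall i, is_diag_mx (polK s K x)`_i.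
Proof. by move=> h i; rewrite coef_poly; case: ifP => _ //; exact: mx0_is_diag. Qed.

Lemma geo_unique K (r q s : {poly M}) : r`_0 = 1 -> s`_0 = 1 -> q`_0 = 1 ->
  eqK K q (r * s) -> eqK K (geo K q) (geo K s * geo K r).
Proof.
move=> r0 s0 q0 e.
have [rG _] := geo_inv K r0; have [sG _] := geo_inv K s0; have [_ Gq] := geo_inv K q0.
have qW : eqK K (q * (geo K s * geo K r)) 1.
  apply: eqK_trans (eqK_mulr _ e) _.
  rewrite -mulrA (mulrA s).
  apply: eqK_trans (eqK_mull _ (eqK_mulr _ sG)) _.
  by rewrite mul1r.
rewrite -[geo K q]mulr1.
apply: eqK_trans (eqK_mull _ (eqK_sym qW)) _.
rewrite mulrA.
apply: eqK_trans (eqK_mulr _ Gq) _.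
by rewrite mul1r.
Qed.

Lemma phib_eq d b (Rr S Q : ser) : supp 0 Rr -> Rr 0 = 1%:M -> supp 0 S -> S 0 = 1%:M ->
  (forall l, is_diag_mx (S l)) -> (forall k, is_diag_mx (b k)) -> (forall k, (d < k)%N -> b k = 0) ->
  (forall l, Q l = lmul 0 Rr S l) -> forall l, phib_le0 d b Q l = phib_le0 d b Rr l.
Proof.
move=> sR R0 sS S0 dS db bd eQ l.
rewrite /phib_le0 /Defs.trunc0 /=; case: ifP => // _.
pose B := lpolyinv b.
have sB : supp d B.
  move=> k hk; rewrite /B /lpolyinv; case: ifP => // _; apply: bd; lia.
have sQ : supp 0 Q by apply: (supp_ext (fun l => esym (eQ l))); exact: (supp_lmul 0 sR sS).
have Q0 : Q 0 = 1%:M by rewrite eQ lmul00 R0 S0 mul1mx.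
pose K := (absz (l + (0 + d + 0)%N%:Z)).+1.
have hK : l + (0 + d + 0)%N%:Z < K%:Z by rewrite /K; lia.
have rR := @rep_polK 0 K Rr; have rS := @rep_polK 0 K S; have rQ := @rep_polK 0 K Q.
have rB := @rep_polK d K B.
set pR := polK 0 K Rr in rR *; set pS := polK 0 K S in rS *; set pQ := polK 0 K Q in rQ *.
set pB := polK d K B in rB *.
have R0' : pR`_0 = 1 by rewrite -[0%N]/(0%N : nat) -rR // subr0 R0.
have S0' : pS`_0 = 1 by rewrite -[0%N]/(0%N : nat) -rS // subr0 S0.
have Q0' : pQ`_0 = 1 by rewrite -[0%N]/(0%N : nat) -rQ // subr0 Q0.
have eq1 : eqK K pQ (pR * pS).
  apply: (rep_eqK2 rQ); apply: (rep_ext (fun l => esym (eQ l))).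
  exact: (rep_lmul sR sS (leqnn 0) (leqnn 0) rR rS).
have hL := rep_lmul (supp_lmul d sQ sB) (supp_sinv Q) (leqnn _) (leq0n _)
   (rep_lmul sQ sB (leq0n _) (leqnn _) rQ rB) (rep_sinv sQ Q0 rQ).
have hR := rep_lmul (supp_lmul d sR sB) (supp_sinv Rr) (leqnn _) (leq0n _)
   (rep_lmul sR sB (leq0n _) (leqnn _) rR rB) (rep_sinv sR R0 rR).
apply: (rep_uniq (supp_lmul d (supp_lmul d sQ sB) (supp_sinv Q))
                 (supp_lmul d (supp_lmul d sR sB) (supp_sinv Rr)) hL hR _ hK).
have cSB : pS * pB = pB * pS.
  have dB : forall l, is_diag_mx (B l).
    by move=> k; rewrite /B /lpolyinv; case: ifP => _ //; exact: mx0_is_diag.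
  apply: poly_comm => i j; apply: diag_comm; [exact: (@diag_polK 0 K S dS i)|exact: (@diag_polK d K B dB j)].
have [sG _] := geo_inv K S0'; have [rG _] := geo_inv K R0'.
apply: eqK_trans (eqK_mull _ (geo_unique R0' S0' Q0' eq1)) _.
apply: eqK_trans (eqK_mulr _ (eqK_mulr _ eq1)) _.
rewrite -!mulrA (mulrA pS pB) cSB -!mulrA (mulrA pS).
apply: eqK_mull; apply: eqK_mull.
apply: eqK_trans (eqK_mulr _ sG) _.
by rewrite mul1r.
Qed.

Lemma S_facts (Rr Q : ser) : supp 0 Rr -> Rr 0 = 1%:M -> supp 0 Q -> Q 0 = 1%:M ->
  [/\ supp 0 (lmul 0 (sinv Rr) Q), lmul 0 (sinv Rr) Q 0 = 1%:M &
      forall l, Q l = lmul 0 Rr (lmul 0 (sinv Rr) Q) l].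
Proof.
move=> sR R0 sQ Q0; split.
- exact: (supp_lmul 0 (supp_sinv Rr) sQ).
- by rewrite lmul00 sinv0 Q0 mul1mx.
move=> l.
pose K := (absz l).+1.
have hK : l + (0 + (0 + 0))%N%:Z < K%:Z by rewrite /K; lia.
have rR := @rep_polK 0 K Rr; have rQ := @rep_polK 0 K Q.
set pR := polK 0 K Rr in rR *; set pQ := polK 0 K Q in rQ *.
have R0' : pR`_0 = 1 by rewrite -[0%N]/(0%N : nat) -rR // subr0 R0.
have [rG Gr] := geo_inv K R0'.
have sS := supp_lmul 0 (supp_sinv Rr) sQ.
have rS := rep_lmul (supp_sinv Rr) sQ (leqnn 0) (leqnn 0) (rep_sinv sR R0 rR) rQ.
have h := rep_lmul sR sS (leqnn 0) (leqnn 0) rR rS.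
apply: (rep_uniq sQ (supp_lmul 0 sR sS) rQ h _ hK).
apply: eqK_sym; rewrite mulrA; apply: eqK_trans (eqK_mulr _ rG) _ ; rewrite mul1r.
exact: eqK_refl.
Qed.

Lemma alg_core (r q s dr dq ds a eR eQ : ser) :
  supp 0 r -> supp 0 q -> supp 0 s -> supp 0 dr -> supp 0 dq -> supp 0 ds ->
  supp 1 a -> supp 1 eR -> supp 1 eQ ->
  r 0 = 1%:M -> q 0 = 1%:M -> s 0 = 1%:M ->
  (forall l, lmul 1 (sinv r) dr l + lmul 1 (lmul 1 (sinv r) a) r l = eR l) ->
  (forall l, lmul 1 (sinv q) dq l + lmul 1 (lmul 1 (sinv q) a) q l = eQ l) ->
  (forall l, q l = lmul 0 r s l) ->
  (forall l, dq l = lmul 0 dr s l + lmul 0 r ds l) ->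
  forall l, lmul 1 eR s l + ds l = lmul 1 s eQ l.
Proof.
move=> sr sq ss sdr sdq sds sa seR seQ r0 q0 s0 H1 H2 H3 H4 l.
pose K := (absz (l + 1)).+1.
have hK : l + (1 + 0)%N%:Z < K%:Z by rewrite /K; lia.
have rr := @rep_polK 0 K r; have rq := @rep_polK 0 K q; have rs := @rep_polK 0 K s.
have rdr := @rep_polK 0 K dr; have rdq := @rep_polK 0 K dq; have rds := @rep_polK 0 K ds.
have ra := @rep_polK 1 K a; have reR := @rep_polK 1 K eR; have reQ := @rep_polK 1 K eQ.
set pr := polK 0 K r in rr *; set pq := polK 0 K q in rq *; set ps := polK 0 K s in rs *.
set pdr := polK 0 K dr in rdr *; set pdq := polK 0 K dq in rdq *; set pds := polK 0 K ds in rds *.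
set pa := polK 1 K a in ra *; set peR := polK 1 K eR in reR *; set peQ := polK 1 K eQ in reQ *.
have r0' : pr`_0 = 1 by rewrite -[0%N]/(0%N : nat) -rr // subr0 r0.
have q0' : pq`_0 = 1 by rewrite -[0%N]/(0%N : nat) -rq // subr0 q0.
have s0' : ps`_0 = 1 by rewrite -[0%N]/(0%N : nat) -rs // subr0 s0.
have [rG Gr] := geo_inv K r0'; have [sG Gs] := geo_inv K s0'.
have rGr := rep_sinv sr r0 rr; have rGq := rep_sinv sq q0 rq.
set G := geo K pr in rG Gr rGr *; set Gq := geo K pq in rGq *.
have e3 : eqK K pq (pr * ps).
  apply: (rep_eqK2 rq); apply: (rep_ext (fun l => esym (H3 l))).
  exact: (rep_lmul sr ss (leqnn 0) (leqnn 0) rr rs).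
have e4 : eqK K pdq (pdr * ps + pr * pds).
  apply: (rep_eqK2 rdq); apply: (rep_ext (fun l => esym (H4 l))).
  apply: rep_add.
    exact: (rep_lmul sdr ss (leqnn 0) (leqnn 0) rdr rs).
  exact: (rep_lmul sr sds (leqnn 0) (leqnn 0) rr rds).
have e1 : eqK K peR ('X * (G * pdr) + G * pa * pr).
  apply: (rep_eqK2 reR); apply: (rep_ext H1).
  apply: rep_add.
    apply: rep_shift; first exact: (supp_lmul 1 (supp_sinv r) sdr).
    exact: (rep_lmul (supp_sinv r) sdr (leq0n 1) (leq0n 1) rGr rdr).
  apply: (rep_lmul (supp_lmul 1 (supp_sinv r) sa) sr (leqnn 1) (leq0n 1) _ rr).
  exact: (rep_lmul (supp_sinv r) sa (leq0n 1) (leqnn 1) rGr ra).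
have e2 : eqK K peQ ('X * (Gq * pdq) + Gq * pa * pq).
  apply: (rep_eqK2 reQ); apply: (rep_ext H2).
  apply: rep_add.
    apply: rep_shift; first exact: (supp_lmul 1 (supp_sinv q) sdq).
    exact: (rep_lmul (supp_sinv q) sdq (leq0n 1) (leq0n 1) rGq rdq).
  apply: (rep_lmul (supp_lmul 1 (supp_sinv q) sa) sq (leqnn 1) (leq0n 1) _ rq).
  exact: (rep_lmul (supp_sinv q) sa (leq0n 1) (leqnn 1) rGq ra).
have hL := rep_add (rep_lmul seR ss (leqnn 1) (leq0n 1) reR rs)
   (rep_shift sds rds : rep K (1 + 0) ds ('X * pds)).
have hR := rep_lmul ss seQ (leq0n 1) (leqnn 1) rs reQ.
have sL : supp (1 + 0) (fun l => lmul 1 eR s l + ds l).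
  apply: supp_add; first exact: (supp_lmul 1 seR ss).
  exact: (supp_le (leq0n _) sds).
apply: (rep_uniq sL (supp_lmul 1 ss seQ) hL hR _ hK).
have GqE : eqK K Gq (geo K ps * G) := geo_unique r0' s0' q0' e3.
have sGq : eqK K (ps * Gq) G.
  apply: eqK_trans (eqK_mull _ GqE) _; rewrite mulrA.
  by apply: eqK_trans (eqK_mulr _ sG) _; rewrite mul1r.
apply: eqK_sym.
apply: eqK_trans (eqK_mull _ e2) _.
set X := ('X : {poly M}).
have E1 : ps * (X * (Gq * pdq)) + ps * (Gq * pa * pq) = X * ((ps * Gq) * pdq) + (ps * Gq) * pa * pq.
  by rewrite !mulrA (commr_polyX ps).
rewrite mulrDr E1; clear E1.
apply: eqK_trans (eqK_add (eqK_mull X (eqK_mulr pdq sGq)) (eqK_mulr pq (eqK_mulr pa sGq))) _.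
apply: eqK_trans (eqK_add (eqK_mull _ (eqK_mull _ e4)) (eqK_mull _ e3)) _.
have E2 : X * (G * (pdr * ps + pr * pds)) + G * pa * (pr * ps) =
   X * G * pdr * ps + X * (G * pr) * pds + G * pa * pr * ps.
  by rewrite !mulrDr !mulrA.
rewrite E2; clear E2.
apply: eqK_trans (eqK_add (eqK_add (@eqK_refl K _) (eqK_mulr _ (eqK_mull _ Gr))) (@eqK_refl K _)) _.
have E3 : X * G * pdr * ps + X * 1 * pds + G * pa * pr * ps =
   (X * (G * pdr) + G * pa * pr) * ps + X * pds.
  by rewrite mulr1 mulrDl !mulrA addrAC.
rewrite E3; clear E3.
exact: (eqK_add (eqK_mulr _ (eqK_sym e1)) (@eqK_refl K _)).
Qed.


End Alg.

Set Implicit Arguments.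
Unset Strict Implicit.
Unset Printing Implicit Defensive.
Unset Implicit Arguments.
Section Deriv.
Variables (R : realType) (n : nat).
Local Notation C := (R[i]).
Local Notation V := ('rV[C]_n.+1).

Section Entry.
Variables (a b : nat).
Definition coordf (i : 'I_a) (j : 'I_b) : 'M[C]_(a, b) -> C^o := fun N => N i j.
Lemma coordf_lin i j : linear (coordf i j).
Proof. by move=> k x y; rewrite /coordf !mxE. Qed.
Definition coordL i j : {linear 'M[C]_(a, b) -> C^o} :=
  HB.pack (coordf i j) (GRing.isLinear.Build _ _ _ _ _ (coordf_lin i j)).
Lemma coordL_cont i j : continuous (coordL i j : ('M[C]_(a, b) : normedModType C) -> C^o).
Proof. exact: coord_continuous. Qed.

Lemma diff_entry (f : V -> 'M[C]_(a, b)) z i j : differentiable f z ->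
  differentiable (fun p => (f p i j : C^o)) z.
Proof.
move=> df; have -> : (fun p => (f p i j : C^o)) = (coordL i j) \o f by [].
have dc := linear_differentiable (f z) (coordL_cont i j).
exact: differentiable_comp.
Qed.

Lemma derive_entry (f : V -> 'M[C]_(a, b)) z v i j : differentiable f z ->
  'D_v (fun p => (f p i j : C^o)) z = ('D_v f z) i j.
Proof.
move=> df; have -> : (fun p => (f p i j : C^o)) = (coordL i j) \o f by [].
have dc := linear_differentiable (f z) (coordL_cont i j).
rewrite deriveE; last exact: differentiable_comp.
rewrite diff_comp // diff_lin /=; last exact: coordL_cont.
by rewrite deriveE.
Qed.

Lemma entries_diff (f : V -> 'M[C]_(a, b)) z :
  (forall i j, differentiable (fun p => (f p i j : C^o)) z) -> differentiable f z.
Proof.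
move=> h.
have -> : f = (fun p => \sum_(i < a) \sum_(j < b) (f p i j : C^o) *: delta_mx i j).
  by apply: funext => p; rewrite {1}(matrix_sum_delta (f p)).
rewrite -fct_sumE; apply: differentiable_sum => i.
rewrite -fct_sumE; apply: differentiable_sum => j.
exact: differentiableZl.
Qed.
End Entry.

Local Notation M := ('M[C]_n.+1).

Lemma mulmx_fun (f g : V -> M) i j :
  (fun p => ((f p *m g p) i j : C^o)) =
  \sum_(k < n.+1) ((fun p => (f p i k : C^o)) * (fun p => (g p k j : C^o))).
Proof. by apply: funext => p; rewrite mxE fct_sumE. Qed.

Lemma diff_mulmx (f g : V -> M) z : differentiable f z -> differentiable g z ->
  differentiable (fun p => f p *m g p) z.
Proof.
move=> df dg; apply: entries_diff => i j; rewrite mulmx_fun.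
apply: differentiable_sum => k; apply: differentiableM; exact: diff_entry.
Qed.

Lemma derive_mulmx (f g : V -> M) z v : differentiable f z -> differentiable g z ->
  'D_v (fun p => f p *m g p) z = 'D_v f z *m g z + f z *m 'D_v g z.
Proof.
move=> df dg; apply/matrixP => i j.
rewrite -derive_entry; last exact: diff_mulmx.
rewrite mulmx_fun derive_sum; last first.
  by move=> k; apply: diff_derivable; apply: differentiableM; exact: diff_entry.
rewrite !mxE -big_split; apply: eq_bigr => k _ /=.
rewrite deriveM; [|exact/diff_derivable/diff_entry|exact/diff_derivable/diff_entry].
have e1 : 'D_v (fun p => (f p i k : C^o)) z = ('D_v f z) i k by exact: derive_entry.
have e2 : 'D_v (fun p => (g p k j : C^o)) z = ('D_v g z) k j by exact: derive_entry.
rewrite e1 e2.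
rewrite addrC; congr (_ + _); exact: mulrC.
Qed.

Local Notation ser := (lser R n.+1).

Lemma Dlmul N (x y : V -> ser) z :
  (forall l, differentiable (fun p => x p l) z) -> (forall l, differentiable (fun p => y p l) z) ->
  forall l, differentiable (fun p => lmul N (x p) (y p) l) z.
Proof.
move=> dx dy l; rewrite /lmul; case: (l + _ < 0); first exact: differentiable_cst.
rewrite -fct_sumE; apply: differentiable_sum => k; exact: diff_mulmx.
Qed.

Lemma derive_lmul N (x y : V -> ser) z v :
  (forall l, differentiable (fun p => x p l) z) -> (forall l, differentiable (fun p => y p l) z) ->
  forall l, 'D_v (fun p => lmul N (x p) (y p) l) z =
    lmul N (fun k => 'D_v (fun p => x p k) z) (y z) l + lmul N (x z) (fun k => 'D_v (fun p => y p k) z) l.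
Proof.
move=> dx dy l; rewrite /lmul; case: (l + _ < 0).
  by rewrite (derive_cst (0 : M)) addr0.
rewrite -fct_sumE derive_sum; last first.
  by move=> k; apply: diff_derivable; exact: diff_mulmx.
rewrite -big_split; apply: eq_bigr => k _ /=; exact: derive_mulmx.
Qed.

Lemma Dsinv (x : V -> ser) z : (forall l, differentiable (fun p => x p l) z) ->
  forall l, differentiable (fun p => sinv (x p) l) z.
Proof.
move=> dx l; rewrite /sinv; case: (l < 0); first exact: differentiable_cst.
rewrite -fct_sumE; apply: differentiable_sum => m /=.
case: m => m' _ /=; elim: m' l => [|m' IH] l' /=; first exact: differentiable_cst.
apply: Dlmul; last exact: IH.
move=> k; apply: differentiableB; [exact: differentiable_cst | exact: dx].
Qed.

Lemma Dphib d b (x : V -> ser) z : (forall l, differentiable (fun p => x p l) z) ->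
  forall l, differentiable (fun p => phib_le0 d b (x p) l) z.
Proof.
move=> dx l; rewrite /phib_le0 /Defs.trunc0; case: (l <= 0); last exact: differentiable_cst.
apply: Dlmul; last exact: Dsinv.
by apply: Dlmul => // k; exact: differentiable_cst.
Qed.

Lemma chain_rule (W : normedModType C) (f : ('rV[C]_n.+1 : normedModType C) -> W)
  (u : ('rV[C]_n.+1 : normedModType C) -> ('rV[C]_n.+1 : normedModType C)) z (a : 'I_n.+1) :
  differentiable u z -> differentiable f (u z) ->
  'D_(rdir R a) (f \o u) z = \sum_(i < n.+1) jac u i a z *: 'D_(rdir R i) f (u z).
Proof.
move=> du df.
have dfu : differentiable (f \o u) z := differentiable_comp du df.
rewrite (deriveE _ dfu) (diff_comp du df) /=.
rewrite -(deriveE _ du).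
rewrite {1}(row_sum_delta ('D_(rdir R a) u z)) linear_sum; apply: eq_bigr => i _.
by rewrite linearZ /= -(deriveE _ df).
Qed.

End Deriv.

Unset Implicit Arguments.

Section M1.
Variables (R : realType) (n : nat).
Local Notation C := (R[i]).
Local Notation M := ('M[C]_n.+1).
Local Notation ser := (lser R n.+1).

Lemma lmul_sumr (N : nat) (x : ser) (c : 'I_n.+1 -> C) (y : 'I_n.+1 -> ser) l :
  lmul N x (fun k => \sum_(i < n.+1) c i *: y i k) l = \sum_(i < n.+1) c i *: lmul N x (y i) l.
Proof.
rewrite /lmul; case: (_ < 0); first by rewrite big1 // => i _; rewrite scaler0.
under eq_bigr => k _ do rewrite mulmx_sumr.
rewrite exchange_big /=; apply: eq_bigr => i _; rewrite scaler_sumr; apply: eq_bigr => k _.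
by rewrite scalemxAr.
Qed.

Lemma lmul_suml (N : nat) (x : ser) (c : 'I_n.+1 -> C) (y : 'I_n.+1 -> ser) l :
  lmul N (fun k => \sum_(i < n.+1) c i *: y i k) x l = \sum_(i < n.+1) c i *: lmul N (y i) x l.
Proof.
rewrite /lmul; case: (_ < 0); first by rewrite big1 // => i _; rewrite scaler0.
under eq_bigr => k _ do rewrite mulmx_suml.
rewrite exchange_big /=; apply: eq_bigr => i _; rewrite scaler_sumr; apply: eq_bigr => k _.
by rewrite scalemxAl.
Qed.

Lemma diag_mul_off (A B : M) (r c : 'I_n.+1) : is_diag_mx A -> is_diag_mx B -> r != c ->
  (A *m B) r c = 0.
Proof.
move=> /is_diag_mxP dA /is_diag_mxP dB rc; rewrite mxE big1 // => k _.
case: (eqVneq r k) => [<-|rk]; first by rewrite dB ?mulr0.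
by rewrite dA ?mul0r.
Qed.

Lemma offdiag_step (eR s eQ : ser) (w : 'rV[C]_n.+1) (m : nat) (r c : 'I_n.+1) :
  r != c -> eR (-1) = - diag_mx w -> eQ (-1) = - diag_mx w ->
  (forall k : nat, is_diag_mx (eR k)) -> (forall k : nat, is_diag_mx (eQ k)) ->
  supp 0 s -> (forall k : nat, (k <= m)%N -> is_diag_mx (s k)) ->
  (lmul 1 eR s m) r c = - (w 0 r * s m.+1 r c) /\ (lmul 1 s eQ m) r c = - (s m.+1 r c * w 0 c).
Proof.
move=> rc eRm eQm deR deQ ss ds.
have e : m%:Z + (2 * 1)%N%:Z = (m.+2)%:Z by lia.
rewrite /lmul e /=; split.
- rewrite big_ord_recl /= mxE summxE big1 ?addr0.
    have -> : (0%:Z - 1%:Z) = -1 by [].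
    have E : (m%:Z + 1%Z) = m.+1%:Z by lia.
    by rewrite E eRm mulNmx mxE mul_diag_mx mxE.
  move=> k _; rewrite /bump /=.
  have -> : ((1 + k)%N%:Z - 1%:Z) = k%:Z by lia.
  have [km|km] := leqP k m.
    have -> : (m%:Z - (1 + k)%N%:Z + 1%:Z) = (m - k)%N%:Z by lia.
    apply: diag_mul_off => //; apply: ds; exact: leq_subr.
  by rewrite ss ?mulmx0 ?mxE //; lia.
- rewrite big_ord_recr /= mxE summxE big1 ?add0r.
    have -> : ((m.+2)%N%:Z - 1%:Z) = m.+1%:Z by lia.
    have -> : (m%:Z - (m.+2)%N%:Z + 1%:Z) = -1 by lia.
    by rewrite eQm mulmxN mxE mul_mx_diag mxE.
  move=> k _ /=.
  case: k => [[|k]] hk /=.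
    by rewrite ss ?mul0mx ?mxE.
  have -> : (k.+1%:Z - 1%:Z) = k%:Z by lia.
  have -> : (m%:Z - k.+1%:Z + 1%:Z) = (m - k)%N%:Z by lia.
  apply: diag_mul_off => //; apply: ds; lia.
Qed.

End M1.

Unset Implicit Arguments.

Section Main.
Variables (R : realType) (n : nat).
Local Notation C := (R[i]).
Local Notation M := ('M[C]_n.+1).
Local Notation ser := (lser R n.+1).
Local Notation VN := ('rV[C]_n.+1 : normedModType C).

Variables (Dx Du : set 'rV[C]_n.+1) (Th : set C) (u v : 'rV[C]_n.+1 -> 'rV[C]_n.+1)
  (q : 'I_n.+1 -> 'rV[C]_n.+1 -> C -> M) (d : nat) (b : nat -> M) (T T' : 'rV[C]_n.+1 -> C -> ser).
Hypotheses (oDx : open_rV Dx) (oDu : open_rV Du)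
 (du : forall x, Dx x -> cdiff_rr u x)
 (vu : forall x, Dx x -> Du (u x) /\ v (u x) = x)
 (uv : forall y, Du y -> Dx (v y) /\ u (v y) = y)
 (dv : forall y, Du y -> cdiff_rr v y)
 (dqt : forall i t y, Th t -> Du y -> cdiff_CM (q i y) t)
 (db : forall k, is_diag_mx (b k)) (bd : forall k, (d < k)%N -> b k = 0)
 (dT : forall t, Th t -> is_dressing Du (fun i y => Au q i y t) (fun i _ => @eunit R n.+1 i) (fun y => T y t))
 (dT' : forall t, Th t -> is_dressing Dx (fun a x => Ax u q a x t) (amat u) (fun x => T' x t)).

Lemma near_open (D : set 'rV[C]_n.+1) x : open_rV D -> D x -> \forall y \near (x : VN), D y.
Proof. by move=> oD Dx0; apply: open_nbhs_nbhs; split. Qed.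

Lemma jac_inv x k : Dx x -> exists cf : 'I_n.+1 -> C,
  forall i, \sum_(a < n.+1) cf a * jac u i a x = (i == k)%:R.
Proof.
move=> Dx0; have [Duy vux] := vu x Dx0.
exists (fun a => jac v a k (u x)) => i.
have dvy : differentiable (v : VN -> VN) (u x : VN) := dv (u x) Duy.
have duv : differentiable (u : VN -> VN) (v (u x) : VN) by rewrite vux; exact: du.
have h := chain_rule R n _ (u : VN -> VN) (v : VN -> VN) (u x) k dvy duv.
have e : 'D_(rdir R k : VN) ((u : VN -> VN) \o (v : VN -> VN)) (u x : VN) = rdir R k.
  rewrite (near_eq_derive (g := id)); first exact: derive_id.
  apply: (filterS _ (near_open Du (u x) oDu Duy)) => y' hy'; exact: (uv y' hy').2.
rewrite e vux in h.
have := congr1 (fun N : 'rV[C]_n.+1 => N 0 i) h; rewrite /rdir mxE eqxx /= => ->.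
rewrite summxE; apply: eq_bigr => a _; rewrite mxE; by [].
Qed.

Lemma jac_sep x r c : Dx x -> r != c -> exists a, jac u r a x != jac u c a x.
Proof.
move=> Dx0 rc; have [cf hcf] := jac_inv x r Dx0.
case: (boolP [exists a, jac u r a x != jac u c a x]) => [/existsP //|/existsPn H].
have := hcf c; rewrite eq_sym (negbTE rc) /=.
rewrite (eq_bigr (fun a => cf a * jac u r a x)); last first.
  by move=> a _; have := H a; rewrite negbK => /eqP ->.
by rewrite hcf eqxx => /eqP; rewrite oner_eq0.
Qed.

Lemma is_diag_sum (c : 'I_n.+1 -> C) (A : 'I_n.+1 -> M) :
  (forall i, is_diag_mx (A i)) -> is_diag_mx (\sum_(i < n.+1) c i *: A i).
Proof.
move=> h; apply/is_diag_mxP => r c0 rc; rewrite summxE big1 // => i _.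
by rewrite mxE; move/is_diag_mxP: (h i) => -> //; rewrite mulr0.
Qed.

Lemma amat_sum a x : amat u a x = \sum_(i < n.+1) jac u i a x *: eunit R i.
Proof. by rewrite /amat diag_mx_sum_delta; apply: eq_bigr => i _; rewrite mxE. Qed.

Lemma dressR t (h : 'I_n.+1 -> 'rV[C]_n.+1 -> ser) : Th t ->
  (forall i p, Du p -> forall l,
     lmul 1 (sinv (T p t)) (pderiv i (fun y => T y t) p) l
     + lmul 1 (lmul 1 (sinv (T p t)) (Au q i p t)) (T p t) l = ltarget (eunit R i) (h i p) l) ->
  forall a x, Dx x -> forall l,
     lmul 1 (sinv (T (u x) t)) (pderiv a (fun p => T (u p) t) x) l
     + lmul 1 (lmul 1 (sinv (T (u x) t)) (Ax u q a x t)) (T (u x) t) l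
     = ltarget (amat u a x) (fun k => \sum_(i < n.+1) jac u i a x *: h i (u x) k) l.
Proof.
move=> tTh heq a x Dx0 l.
have [Duy _] := vu x Dx0.
have [_ _ Tdf _] := dT t tTh.
have e1 : pderiv a (fun p => T (u p) t) x =
    (fun k => \sum_(i < n.+1) jac u i a x *: pderiv i (fun y => T y t) (u x) k).
  apply: funext => k; rewrite /pderiv.
  exact: (chain_rule R n _ (fun y : VN => T y t k) (u : VN -> VN) x a (du x Dx0) (Tdf k (u x) Duy)).
have e2 : lmul 1 (sinv (T (u x) t)) (Ax u q a x t) =
    (fun k => \sum_(i < n.+1) jac u i a x *: lmul 1 (sinv (T (u x) t)) (Au q i (u x) t) k).
  by apply: funext => k; rewrite -lmul_sumr.
rewrite e1 lmul_sumr e2 lmul_suml -big_split /=.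
rewrite (eq_bigr (fun i => jac u i a x *: ltarget (eunit R i) (h i (u x)) l)); last first.
  by move=> i _; rewrite -scalerDr heq.
rewrite /ltarget; case: (l == -1).
  by rewrite amat_sum -sumrN; apply: eq_bigr => i _; rewrite scalerN.
by [].
Qed.

Lemma derive_zero (F : VN -> M) z w : (forall p, F p = 0) -> 'D_w F z = 0.
Proof. by move=> h; rewrite (_ : F = cst 0) ?derive_cst //; apply: funext => p; rewrite h. Qed.

Lemma phi_eq t : Th t -> forall x, Dx x -> forall l,
  phib_le0 d b (T' x t) l = phib_le0 d b (T (u x) t) l.
Proof.
move=> tTh.
have [Tneg T0 Tdf [h [hdiag hneg heq]]] := dT t tTh.
have [T'neg T'0 T'df [h' [h'diag h'neg h'eq]]] := dT' t tTh.
pose S x := lmul 0 (sinv (T (u x) t)) (T' x t).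
have sR x : supp 0 (T (u x) t) by move=> l hl; apply: Tneg; lia.
have R0 x : T (u x) t 0 = 1%:M := T0 (u x).
have sQ x : supp 0 (T' x t) by move=> l hl; apply: T'neg; lia.
have Q0 x : T' x t 0 = 1%:M := T'0 x.
have SF x := S_facts (sR x) (R0 x) (sQ x) (Q0 x).
have dR x l : Dx x -> differentiable (fun p : VN => T (u p) t l) (x : VN).
  move=> Dx0; have [Duy _] := vu x Dx0.
  exact: (differentiable_comp (du x Dx0) (Tdf l (u x) Duy)).
have dS x l : Dx x -> differentiable (fun p : VN => S p l) (x : VN).
  move=> Dx0; apply: (Dlmul R n 0 (fun p => sinv (T (u p) t)) (fun p => T' p t)).
    by move=> k; apply: Dsinv => k'; exact: dR.
  by move=> k; exact: T'df.
have diagS : forall (m : nat) x, Dx x -> is_diag_mx (S x m).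
  elim/ltn_ind => m IH x Dx0.
  have [sS S0 H3] := SF x.
  case: m IH => [|m] IH.
    have e0 : S x 0%N = 1%:M := S0.
    by rewrite e0; exact: scalar_mx_is_diag.
  apply/is_diag_mxP => r c rc.
  have rc' : r != c by [].
  have [a ha] := jac_sep x r c Dx0 rc'.
  have H1 := dressR t h tTh heq a x Dx0.
  have H2 := h'eq a x Dx0.
  have H4 : forall l, pderiv a (fun p => T' p t) x l =
      lmul 0 (pderiv a (fun p => T (u p) t) x) (S x) l + lmul 0 (T (u x) t) (pderiv a S x) l.
    move=> l; rewrite /pderiv.
    rewrite (near_eq_derive (g := fun p : VN => lmul 0 (T (u p) t) (S p) l)).
      exact: (derive_lmul R n 0 (fun p => T (u p) t) S x (rdir R a) (fun k => dR x k Dx0) (fun k => dS x k Dx0) l).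
    apply: (filterS _ (near_open Dx x oDx Dx0)) => p Dp; have [_ _ e] := SF p; exact: e.
  have sdr : supp 0 (pderiv a (fun p => T (u p) t) x).
    by move=> l hl; rewrite /pderiv; apply: derive_zero => p; apply: Tneg; lia.
  have sdq : supp 0 (pderiv a (fun p => T' p t) x).
    by move=> l hl; rewrite /pderiv; apply: derive_zero => p; apply: T'neg; lia.
  have sds : supp 0 (pderiv a S x).
    by move=> l hl; rewrite /pderiv; apply: derive_zero => p; have [sp _ _] := SF p; apply: sp.
  have sa : supp 1 (Ax u q a x t).
    move=> l hl; rewrite /Ax big1 // => i _; rewrite /Au /lpot.
    have -> : (l == 0) = false by apply/negbTE; lia.
    have -> : (l == -1) = false by apply/negbTE; lia.
    by rewrite scaler0.
  have seR : supp 1 (ltarget (amat u a x) (fun k => \sum_(i < n.+1) jac u i a x *: h i (u x) k)).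
    move=> l hl; rewrite /ltarget.
    have -> : (l == -1) = false by apply/negbTE; lia.
    by rewrite big1 // => i _; rewrite hneg ?scaler0 //; lia.
  have seQ : supp 1 (ltarget (amat u a x) (h' a x)).
    move=> l hl; rewrite /ltarget.
    have -> : (l == -1) = false by apply/negbTE; lia.
    by rewrite h'neg //; lia.
  have AC := alg_core (sR x) (sQ x) sS sdr sdq sds sa seR seQ (R0 x) (Q0 x) S0 H1 H2 H3 H4 m.
  set eR := ltarget (amat u a x) (fun k => \sum_(i < n.+1) jac u i a x *: h i (u x) k) in AC.
  set eQ := ltarget (amat u a x) (h' a x) in AC.
  have eRm : eR (-1) = - diag_mx (\row_i jac u i a x) by rewrite /eR /ltarget eqxx.
  have eQm : eQ (-1) = - diag_mx (\row_i jac u i a x) by rewrite /eQ /ltarget eqxx.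
  have deR : forall k : nat, is_diag_mx (eR k).
    move=> k; rewrite /eR /ltarget.
    have -> : (k%:Z == -1) = false by apply/negbTE; lia.
    by apply: is_diag_sum => i; exact: hdiag.
  have deQ : forall k : nat, is_diag_mx (eQ k).
    move=> k; rewrite /eQ /ltarget.
    have -> : (k%:Z == -1) = false by apply/negbTE; lia.
    exact: h'diag.
  have dSk : forall k : nat, (k <= m)%N -> is_diag_mx (S x k).
    by move=> k hk; apply: IH => //; rewrite ltnS.
  have [OD1 OD2] := offdiag_step R n eR (S x) eQ (\row_i jac u i a x) m r c rc' eRm eQm deR deQ sS dSk.
  have dz : (pderiv a S x m) r c = 0.
    rewrite /pderiv -(derive_entry R n n.+1 n.+1 (fun p => S p m) x (rdir R a) r c (dS x m Dx0)).
    rewrite (near_eq_derive (g := cst 0)) ?derive_cst //.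
    apply: (filterS _ (near_open Dx x oDx Dx0)) => p Dp.
    by move/is_diag_mxP: (IH m (ltnSn m) p Dp) => ->.
  have := congr1 (fun N : M => N r c) AC; rewrite /= mxE OD1 OD2 dz addr0 mxE.
  move/eqP; rewrite eqr_opp mulrC -subr_eq0 -mulrBr mulf_eq0 => /orP[/eqP //|].
  by rewrite mxE subr_eq0 (negbTE ha).
move=> x Dx0 l.
have [sS S0 H3] := SF x.
apply: (phib_eq (sR x) (R0 x) sS S0 _ db bd H3).
case=> [m|m]; first exact: diagS.
by rewrite sS ?mx0_is_diag.
Qed.

Lemma lin_comb4 (c : 'I_n.+1 -> C) (A B Cc Dd : 'I_n.+1 -> M) :
  \sum_(i < n.+1) c i *: A i - (- (\sum_(i < n.+1) c i *: B i) + \sum_(i < n.+1) c i *: Cc i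
     - \sum_(i < n.+1) c i *: Dd i)
  = \sum_(i < n.+1) c i *: (A i - (- B i + Cc i - Dd i)).
Proof.
rewrite [RHS](eq_bigr (fun i => c i *: A i - (- (c i *: B i) + c i *: Cc i - c i *: Dd i))); last first.
  by move=> i _; rewrite !scalerBr scalerDr scalerN.
by rewrite !sumrB big_split sumrN.
Qed.

Definition XU i y t l : M :=
  tderiv (Au q i y) t l - (- pderiv i (fun p => phib_le0 d b (T p t)) y l
    + lmul d.+1 (phib_le0 d b (T y t)) (Au q i y t) l - lmul d.+1 (Au q i y t) (phib_le0 d b (T y t)) l).

Lemma XX_eq t x a l : Th t -> Dx x ->
  tderiv (Ax u q a x) t l - (- pderiv a (fun p => phib_le0 d b (T' p t)) x l
    + lmul d.+1 (phib_le0 d b (T' x t)) (Ax u q a x t) l - lmul d.+1 (Ax u q a x t) (phib_le0 d b (T' x t)) l)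
  = \sum_(i < n.+1) jac u i a x *: XU i (u x) t l.
Proof.
move=> tTh Dx0; have [Duy _] := vu x Dx0.
have [_ _ Tdf _] := dT t tTh.
have ea : tderiv (Ax u q a x) t l = \sum_(i < n.+1) jac u i a x *: tderiv (Au q i (u x)) t l.
  rewrite /tderiv.
  have -> : (fun s : C^o => Ax u q a x s l) =
      \sum_(i < n.+1) (jac u i a x \*: (fun s : C^o => Au q i (u x) s l)).
    by apply: funext => s; rewrite fct_sumE.
  have dg : forall i, derivable (fun s : C^o => Au q i (u x) s l) t 1.
    move=> i; rewrite /Au /lpot; case: (l == 0).
      exact: diff_derivable (dqt i t (u x) tTh Duy).
    exact: derivable_cst.
  rewrite derive_sum; last by move=> i; apply: derivableZ; exact: dg.
  by apply: eq_bigr => i _; rewrite deriveZ //; exact: dg.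
have eb : pderiv a (fun p => phib_le0 d b (T' p t)) x l =
    \sum_(i < n.+1) jac u i a x *: pderiv i (fun p => phib_le0 d b (T p t)) (u x) l.
  have Hn : \forall p \near (x : VN), phib_le0 d b (T' p t) l = phib_le0 d b (T (u p) t) l.
    apply: (filterS _ (near_open Dx x oDx Dx0)) => p Dp; exact: phi_eq.
  have E := near_eq_derive (f := fun p : VN => phib_le0 d b (T' p t) l)
     (g := fun p : VN => phib_le0 d b (T (u p) t) l) (rdir R a) Hn.
  exact: (etrans E (chain_rule R n _ (fun y : VN => phib_le0 d b (T y t) l) (u : VN -> VN) x a (du x Dx0)
             (Dphib R n d b (fun y => T y t) (u x) (fun k => Tdf k (u x) Duy) l))).
have eφ : phib_le0 d b (T' x t) = phib_le0 d b (T (u x) t) := funext (phi_eq t tTh x Dx0).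
have ec : lmul d.+1 (phib_le0 d b (T' x t)) (Ax u q a x t) l =
    \sum_(i < n.+1) jac u i a x *: lmul d.+1 (phib_le0 d b (T (u x) t)) (Au q i (u x) t) l.
  by rewrite eφ; exact: (lmul_sumr R n d.+1 _ (fun i => jac u i a x) (fun i => Au q i (u x) t) l).
have ed : lmul d.+1 (Ax u q a x t) (phib_le0 d b (T' x t)) l =
    \sum_(i < n.+1) jac u i a x *: lmul d.+1 (Au q i (u x) t) (phib_le0 d b (T (u x) t)) l.
  by rewrite eφ; exact: (lmul_suml R n d.+1 _ (fun i => jac u i a x) (fun i => Au q i (u x) t) l).
rewrite ea eb ec ed /XU.
exact: (lin_comb4 (fun i => jac u i a x) (fun i => tderiv (Au q i (u x)) t l)
  (fun i => pderiv i (fun p => phib_le0 d b (T p t)) (u x) l)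
  (fun i => lmul d.+1 (phib_le0 d b (T (u x) t)) (Au q i (u x) t) l)
  (fun i => lmul d.+1 (Au q i (u x) t) (phib_le0 d b (T (u x) t)) l)).
Qed.

Lemma lax_equiv : lax_eq Du Th (Au q) T d b <-> lax_eq Dx Th (Ax u q) T' d b.
Proof.
split.
- move=> LU a x t Dx0 tTh l; apply/eqP; rewrite -subr_eq0; apply/eqP.
  rewrite (XX_eq t x a l tTh Dx0) big1 // => i _.
  have [Duy _] := vu x Dx0.
  have := LU i (u x) t Duy tTh l; move/eqP; rewrite -subr_eq0 => /eqP H.
  by rewrite /XU H scaler0.
- move=> LX i y t Duy tTh l; apply/eqP; rewrite -subr_eq0; apply/eqP.
  have [Dx0 uvy] := uv y Duy.
  have [cf hcf] := jac_inv (v y) i Dx0.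
  have H : forall a, \sum_(k < n.+1) jac u k a (v y) *: XU k (u (v y)) t l = 0.
    move=> a; rewrite -(XX_eq t (v y) a l tTh Dx0).
    by apply/eqP; rewrite subr_eq0; apply/eqP; exact: LX.
  rewrite uvy in H.
  change (XU i y t l = 0).
  have <- : \sum_(k < n.+1) ((k == i)%:R : C) *: XU k y t l = XU i y t l.
    rewrite (bigD1 i) //= eqxx scale1r big1 ?addr0 // => k /negbTE ->.
    by rewrite scale0r.
  under eq_bigr => k _ do rewrite -hcf scaler_suml.
  rewrite exchange_big /= big1 // => a _.
  by under eq_bigr => k _ do rewrite -scalerA; rewrite -scaler_sumr H scaler0.
Qed.

End Main.

Unset Implicit Arguments.
Local Open Scope classical_set_scope.

Theorem mainTheorem5 (R : realType) (n : nat)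
    (Dx Du : set 'rV[R[i]]_n) (Th : set R[i])
    (u : 'rV[R[i]]_n -> 'rV[R[i]]_n)
    (q : 'I_n -> 'rV[R[i]]_n -> R[i] -> 'M[R[i]]_n)
    (d : nat) (b : nat -> 'M[R[i]]_n)
    (T : 'rV[R[i]]_n -> R[i] -> lser R n) (T' : 'rV[R[i]]_n -> R[i] -> lser R n) :
  (* Dx is a domain, u : Dx -> Du an analytic change of coordinates *)
  open_rV Dx -> connected_rV Dx -> open_rV Du -> open_C Th ->
  (forall x, Dx x -> cdiff_rr u x) ->
  (exists v : 'rV[R[i]]_n -> 'rV[R[i]]_n,
     [/\ forall x, Dx x -> Du (u x) /\ v (u x) = x,
         forall y, Du y -> Dx (v y) /\ u (v y) = y &
         forall y, Du y -> cdiff_rr v y]) ->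
  (* regularity of the potentials q_i(u,t) *)
  (forall i t y, Th t -> Du y -> cdiff_rM (fun y' => q i y' t) y) ->
  (forall i t y, Th t -> Du y -> cdiff_CM (q i y) t) ->
  (* for each t the operators L_i(u,t) pairwise commute *)
  (forall t, Th t -> commuting Du (fun i y => Au q i y t)) ->
  (* b in Diag[hbar^{-1}] *)
  (forall k, is_diag_mx (b k)) -> (forall k, (d < k)%N -> b k = 0) ->
  (* T, T' are the dressing transformations of the two families *)
  (forall t, Th t -> is_dressing Du (fun i y => Au q i y t) (fun i _ => @eunit R n i)
                                 (fun y => T y t)) ->
  (forall t, Th t -> is_dressing Dx (fun a x => Ax u q a x t) (amat u)
                                 (fun x => T' x t)) ->
  (lax_eq Du Th (Au q) T d b <-> lax_eq Dx Th (Ax u q) T' d b).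

Proof.
move: Dx Du u q b T T'; case: n => [|n0] Dx Du u q b T T'.
- move=> *; split=> H i p t Dp Tt l; apply/matrixP => r c; by case: r.
- move=> oDx cDx oDu oTh du [v [vu uv dv]] dqy dqt comm db bd dT dT'.
  by eapply lax_equiv; eassumption.
Qed.
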